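(* For all positive integers $h$ and $k$, \[ n^{\sharp}_h(k)=m^{\sharp}_h(k). \]
   Context: For integers $a<b$, $[a,b]=\{j\in\mathbf{Z}: a\le j\le b\}$ is an interval of integers. $hA=\{a_1+\cdots+a_h: a_i\in A\}$ (summands not necessarily distinct). For a nonempty finite $A\subseteq\mathbf{Z}$, $\ell^{\sharp}_h(A)$ is the largest integer $n\ge1$ with $[c,c+n]\subseteq hA$ for some $c\in\mathbf{Z}$ (undefined if $hA$ contains no interval). With $\mathcal{A}_X(k)=\{A\subseteq X:|A|=k\}$ and $\mathbf{N}_0=\{0,1,2,\ldots\}$: $n^{\sharp}_h(k)=\max\{\ell^{\sharp}_h(A):A\in\mathcal{A}_{\mathbf{N}_0}(k)\}$ and $m^{\sharp}_h(k)=\max\{\ell^{\sharp}_h(A):A\in\mathcal{A}_{\mathbf{Z}}(k)\}$, maxima taken over sets for which $\ell^{\sharp}_h(A)$ is defined. *)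

(* Defs.v *)
From Stdlib Require Import ZArith List.
Import ListNotations.
Open Scope Z_scope.

Definition in_sumset (h : nat) (A : list Z) (x : Z) : Prop :=
  exists l : list Z, length l = h /\ Forall (fun a => In a A) l /\
                     fold_right Z.add 0 l = x.

Definition has_interval (h : nat) (A : list Z) (n : Z) : Prop :=
  exists c : Z, forall j : Z, c <= j <= c + n -> in_sumset h A j.

(* lsharp_is h A n  <->  l#_h(A) is defined and equals n:
   n is the largest integer n >= 1 with [c,c+n] \subseteq hA for some c. *)
Definition lsharp_is (h : nat) (A : list Z) (n : Z) : Prop :=
  1 <= n /\ has_interval h A n /\
  (forall m : Z, 1 <= m -> has_interval h A m -> m <= n).

Definition kset_Z (k : nat) (A : list Z) : Prop := NoDup A /\ length A = k.
Definition kset_N0 (k : nat) (A : list Z) : Prop :=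
  kset_Z k A /\ Forall (fun a => 0 <= a) A.

(* n_sharp_is h k n <-> n#_h(k) is defined and equals n: n is the maximum of
   l#_h(A) over the k-subsets A of N_0 for which l#_h(A) is defined. *)
Definition n_sharp_is (h k : nat) (n : Z) : Prop :=
  (exists A, kset_N0 k A /\ lsharp_is h A n) /\
  (forall A n', kset_N0 k A -> lsharp_is h A n' -> n' <= n).

(* m_sharp_is h k n <-> m#_h(k) is defined and equals n (sets A \subseteq Z). *)
Definition m_sharp_is (h k : nat) (n : Z) : Prop :=
  (exists A, kset_Z k A /\ lsharp_is h A n) /\
  (forall A n', kset_Z k A -> lsharp_is h A n' -> n' <= n).

(* Main.v *)
Require Import Defs.
From Stdlib Require Import ZArith List Lia.
Import ListNotations.
Open Scope Z_scope.

Lemma sum_shift (t : Z) (l : list Z) :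
  fold_right Z.add 0 (map (fun a => a + t) l) =
  fold_right Z.add 0 l + Z.of_nat (length l) * t.
Proof. induction l as [|a l IH]; cbn [map fold_right length]; [lia|]. rewrite IH, Nat2Z.inj_succ. lia. Qed.

Lemma in_sumset_shift h A x t :
  in_sumset h A x -> in_sumset h (map (fun a => a + t) A) (x + Z.of_nat h * t).
Proof.
  intros [l [Hl [Hf Hs]]]. exists (map (fun a => a + t) l). split; [|split].
  - rewrite length_map; auto.
  - rewrite Forall_forall in *. intros y Hy. apply in_map_iff in Hy.
    destruct Hy as [z [<- Hz]]. apply in_map_iff. exists z. auto.
  - rewrite sum_shift. subst. reflexivity.
Qed.

Lemma has_interval_shift h A n t :
  has_interval h A n -> has_interval h (map (fun a => a + t) A) n.
Proof.
  intros [c Hc]. exists (c + Z.of_nat h * t). intros j Hj.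
  replace j with ((j - Z.of_nat h * t) + Z.of_nat h * t) by lia.
  apply in_sumset_shift. apply Hc. lia.
Qed.

Lemma map_shift_back (A : list Z) t :
  map (fun a => a + - t) (map (fun a => a + t) A) = A.
Proof. induction A; simpl; [auto|]. rewrite IHA. f_equal. lia. Qed.

Lemma has_interval_shift_iff h A n t :
  has_interval h A n <-> has_interval h (map (fun a => a + t) A) n.
Proof.
  split; [apply has_interval_shift|].
  intros H. apply (has_interval_shift _ _ _ (-t)) in H.
  rewrite map_shift_back in H. exact H.
Qed.

Lemma lsharp_shift h A n t :
  lsharp_is h A n -> lsharp_is h (map (fun a => a + t) A) n.
Proof.
  intros [H1 [H2 H3]]. split; [auto|split].
  - apply has_interval_shift; auto.
  - intros m Hm Hi. apply H3; auto. eapply has_interval_shift_iff; eauto.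
Qed.

Lemma kset_shift k A t : kset_Z k A -> kset_Z k (map (fun a => a + t) A).
Proof.
  intros [Hn Hl]. split.
  - apply NoDup_map_NoDup_ForallPairs; auto. intros x y _ _ E. lia.
  - rewrite length_map; auto.
Qed.

Definition bnd (A : list Z) : Z := fold_right (fun a s => Z.abs a + s) 0 A.

Lemma bnd_ok A : Forall (fun a => 0 <= a) (map (fun a => a + bnd A) A).
Proof.
  assert (H : forall a, In a A -> Z.abs a <= bnd A).
  { induction A as [|b A IH]; simpl; intros a Ha; [contradiction|].
    assert (0 <= bnd A) by (clear; induction A; simpl; lia).
    destruct Ha as [<-|Ha]; [lia|]. specialize (IH a Ha). lia. }
  rewrite Forall_forall. intros y Hy. apply in_map_iff in Hy.
  destruct Hy as [a [<- Ha]]. specialize (H a Ha). lia.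
Qed.

Theorem mainTheorem6 (h k : nat) (hh : (1 <= h)%nat) (hk : (1 <= k)%nat) :
  forall n : Z, n_sharp_is h k n <-> m_sharp_is h k n.
Proof.
  intros n. split.
  - intros [[A [HA HL]] Hb]. split.
    + exists A. split; [apply HA|auto].
    + intros B n' HB HL'. apply (Hb (map (fun a => a + bnd B) B)).
      * split; [apply kset_shift; auto|apply bnd_ok].
      * apply lsharp_shift; auto.
  - intros [[A [HA HL]] Hb]. split.
    + exists (map (fun a => a + bnd A) A). split.
      * split; [apply kset_shift; auto|apply bnd_ok].
      * apply lsharp_shift; auto.
    + intros B n' HB HL'. apply (Hb B); auto. apply HB.
Qed.
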